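(* Let $A\in\mathbb{R}^{n\times n}$, $b\in\mathbb{R}^n$, $x^0\in\mathbb{R}^n$. Suppose that the generalized Newton method $x^{k+1}=(A-D(x^k))^{-1}b$ is well defined for all $k\ge 0$ (i.e. every $A-D(x^k)$ is nonsingular) and that the sequence $\{x^k\}$ converges to some vector $x^*$. Then $x^*$ is a solution of $Ax-|x|=b$, and $x^k=x^*$ for all sufficiently large $k$. (No uniqueness of solutions of the equation is assumed.)
   Context: For $x\in\mathbb{R}^n$, $|x|$ is the componentwise absolute value, $\mathrm{sign}(x)$ is the vector whose components are $1,0,-1$ according as the corresponding component of $x$ is positive, zero, negative, and $D(x)=\mathrm{diag}(\mathrm{sign}(x))$. The generalized Newton method (GNM) for the absolute value equation $Ax-|x|=b$ is the iteration $x^{k+1}=(A-D(x^k))^{-1}b$, $k=0,1,\ldots$, from a given starting vector $x^0$. *)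

(* Defs.v *)
From HB Require Import structures.
From mathcomp Require Import all_boot all_order all_algebra.
From mathcomp Require Import all_classical all_reals all_analysis.
Set Implicit Arguments. Unset Strict Implicit. Unset Printing Implicit Defensive.
Import Order.TTheory GRing.Theory Num.Theory.
Local Open Scope ring_scope.

Definition absv (R : realType) (n : nat) (x : 'cV[R]_n) : 'cV[R]_n :=
  \col_i `|x i ord0|.

Definition Dsign (R : realType) (n : nat) (x : 'cV[R]_n) : 'M[R]_n :=
  diag_mx (\row_i Num.sg (x i ord0)).

(* Main.v *)
Require Import Defs.
From HB Require Import structures.
From mathcomp Require Import all_boot all_order all_algebra.
From mathcomp Require Import all_classical all_reals all_analysis.
Import Order.TTheory GRing.Theory Num.Theory.
Import numFieldNormedType.Exports.
Local Open Scope classical_set_scope.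
Local Open Scope ring_scope.

Lemma sg_code (R : realType) (a : R) : exists j : 'I_3, (j%:R - 1 : R) = Num.sg a.
Proof.
have [h|h|h] := ltrgtP a 0.
- by exists ord0; rewrite ltr0_sg //= sub0r.
- by exists (@Ordinal 3 2 isT); rewrite gtr0_sg //= -natr1 addrK.
- by exists (@Ordinal 3 1 isT); rewrite h sgr0 /= subrr.
Qed.

Theorem corollary3p4 (R : realType) (n : nat) (A : 'M[R]_n) (b : 'cV[R]_n)
    (x : nat -> 'cV[R]_n) (xstar : 'cV[R]_n) :
  (forall k, (A - Dsign (x k)) \in unitmx) ->
  (forall k, x k.+1 = invmx (A - Dsign (x k)) *m b) ->
  x @ \oo --> xstar ->
  A *m xstar - absv xstar = b /\
  exists K : nat, forall k, (K <= k)%N -> x k = xstar.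
Proof.
move=> Hu Hx Hc.
pose c (f : {ffun 'I_n -> 'I_3}) : 'cV[R]_n :=
  invmx (A - diag_mx (\row_i (((f i : nat)%:R : R) - 1))) *m b.
have Himg : forall k, exists f, x k.+1 = c f.
  move=> k.
  have [g Hg] := fin_all_exists (fun i : 'I_n => @sg_code R (x k i ord0)).
  exists [ffun i => g i]; rewrite Hx /c /Dsign.
  congr (invmx (A - diag_mx _) *m b); apply/rowP => i; rewrite !mxE ffunE.
  by rewrite Hg.
have Hev : \forall k \near \oo, forall f, x k = c f -> c f = xstar.
  apply: filter_forall => f.
  have [->|hne] := eqVneq (c f) xstar.
    by apply: nearW.
  have e0 : 0 < `|xstar - c f| by rewrite normr_gt0 subr_eq0 eq_sym.
  move/cvgrPdist_lt : Hc => /(_ _ e0).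
  apply: filterS => k hk hxk.
  by move: hk; rewrite hxk ltxx.
case: Hev => N _ HN.
have Hfin : forall k, (N.+1 <= k)%N -> x k = xstar.
  move=> [|k] // hk.
  have [f hf] := Himg k.
  by rewrite hf; apply: (HN k.+1) => //=; apply: ltnW.
split; last by exists N.+1.
have e1 := Hx N.+1.
rewrite !Hfin // in e1.
have : (A - Dsign xstar) *m xstar = b.
  rewrite [X in _ *m X]e1 mulmxA mulmxV ?mul1mx //.
  by have := Hu N.+1; rewrite Hfin.
move=> <-.
rewrite mulmxBl; congr (_ - _).
apply/colP => i; rewrite /absv /Dsign mul_diag_mx !mxE.
by rewrite normrEsg.
Qed.
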